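(* Suppose that $f$ is a non-negative $C^2$ function on $[-2\ell,2\ell]\subset\mathbb{R}$ satisfying $f''\ge f-a$ for some constant $a>0$. If $\max_{[-\ell,\ell]}f\ge2a$, then $\int_{-2\ell}^{2\ell}f\ge2\sqrt2\,a\sinh(\ell/\sqrt2)$.
   Context: $\ell>0$. *)

(* Defs.v *)
From Stdlib Require Import Reals.
From Coquelicot Require Import Coquelicot.
Open Scope R_scope.

(* g is the derivative of f on the closed interval [a,b]
   (one-sided at the endpoints: difference quotients taken within [a,b]). *)
Definition is_derive_on (a b : R) (f g : R -> R) : Prop :=
  forall x, a <= x <= b ->
    filterlim (fun h => (f (x + h) - f x) / h)
      (within (fun h => h <> 0 /\ a <= x + h <= b) (locally 0))
      (locally (g x)).

Definition continuous_on_cc (a b : R) (g : R -> R) : Prop :=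
  forall x, a <= x <= b ->
    filterlim g (within (fun y => a <= y <= b) (locally x)) (locally (g x)).

Definition C2_on_with (a b : R) (f f1 f2 : R -> R) : Prop :=
  is_derive_on a b f f1 /\ is_derive_on a b f1 f2 /\ continuous_on_cc a b f2.

(* Main.v *)
Require Import Defs.
From Stdlib Require Import Reals Lra.
From Coquelicot Require Import Coquelicot.
Open Scope R_scope.

Lemma ballR x e y : ball x e y <-> Rabs (y - x) < e.
Proof. unfold ball; simpl; unfold AbsRing_ball; simpl. unfold abs, minus, plus, opp; simpl. tauto. Qed.

Definition cw (A B : R) (F : R -> R) (x : R) : Prop :=
  filterlim F (within (fun y => A <= y <= B) (locally x)) (locally (F x)).

Lemma cw_ed A B F x : cw A B F x -> forall eps, 0 < eps -> exists d, 0 < d /\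
  forall y, A <= y <= B -> Rabs (y - x) < d -> Rabs (F y - F x) < eps.
Proof.
  intros H eps He. destruct (proj1 (filterlim_locally F (F x)) H (mkposreal eps He)) as [d Hd].
  exists d; split; [apply cond_pos|]. intros y Hy Hyx.
  specialize (Hd y (proj2 (ballR _ _ _) Hyx) Hy). apply ballR in Hd. exact Hd.
Qed.

Lemma ed_cw A B F x : (forall eps, 0 < eps -> exists d, 0 < d /\
  forall y, A <= y <= B -> Rabs (y - x) < d -> Rabs (F y - F x) < eps) -> cw A B F x.
Proof.
  intros H. apply filterlim_locally. intros eps. destruct (H eps (cond_pos eps)) as [d [Hd H']].
  exists (mkposreal d Hd). intros y Hy HD. apply ballR. apply ballR in Hy. apply H'; auto.
Qed.

Lemma ed_cont F x : (forall eps, 0 < eps -> exists d, 0 < d /\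
  forall y, Rabs (y - x) < d -> Rabs (F y - F x) < eps) -> continuous F x.
Proof.
  intros H. apply filterlim_locally. intros eps. destruct (H eps (cond_pos eps)) as [d [Hd H']].
  exists (mkposreal d Hd). intros y Hy. apply ballR. apply ballR in Hy. apply H'; auto.
Qed.

Lemma der_ed A B F G x : is_derive_on A B F G -> A <= x <= B ->
  forall eps, 0 < eps -> exists d, 0 < d /\ forall h, h <> 0 -> A <= x + h <= B -> Rabs h < d ->
  Rabs ((F (x + h) - F x) / h - G x) < eps.
Proof.
  intros H Hx eps He. specialize (H x Hx).
  destruct (proj1 (filterlim_locally _ (G x)) H (mkposreal eps He)) as [d Hd].
  exists d; split; [apply cond_pos|]. intros h Hh Hxh Hhd.
  assert (Hb : ball 0 d h) by (apply ballR; rewrite Rminus_0_r; exact Hhd).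
  specialize (Hd h Hb (conj Hh Hxh)). apply ballR in Hd. exact Hd.
Qed.

Lemma der_interior A B F G x : is_derive_on A B F G -> A < x < B -> is_derive F x (G x).
Proof.
  intros H Hx. apply is_derive_Reals. intros eps He.
  destruct (der_ed A B F G x H ltac:(lra) eps He) as [d [Hd H']].
  assert (Hm : 0 < Rmin d (Rmin (x - A) (B - x))) by (repeat apply Rmin_pos; lra).
  exists (mkposreal _ Hm). intros h Hh Hhd. simpl in Hhd. apply H'; auto.
  - assert (Rabs h < Rmin (x - A) (B - x)) by (eapply Rlt_le_trans; [exact Hhd|apply Rmin_r]).
    assert (Rabs h < x - A) by (eapply Rlt_le_trans; [exact H0|apply Rmin_l]).
    assert (Rabs h < B - x) by (eapply Rlt_le_trans; [exact H0|apply Rmin_r]).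
    revert H1 H2; unfold Rabs; destruct Rcase_abs; lra.
  - eapply Rlt_le_trans; [exact Hhd|apply Rmin_l].
Qed.

Lemma der_cw A B F G x : is_derive_on A B F G -> A <= x <= B -> cw A B F x.
Proof.
  intros H Hx. apply ed_cw. intros eps He.
  destruct (der_ed A B F G x H Hx 1 ltac:(lra)) as [d [Hd H']].
  set (K := Rabs (G x) + 1).
  assert (HK : 0 < K) by (unfold K; pose proof (Rabs_pos (G x)); lra).
  assert (Hm : 0 < Rmin d (eps / K)) by (apply Rmin_pos; [lra| apply Rdiv_lt_0_compat; lra]).
  exists (Rmin d (eps / K)); split; auto. intros y Hy Hyx.
  destruct (Req_dec y x) as [->|Hne].
  - rewrite Rminus_diag, Rabs_R0; lra.
  - assert (Hh : y - x <> 0) by lra.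
    assert (Hd1 : Rabs (y - x) < d) by (eapply Rlt_le_trans; [exact Hyx|apply Rmin_l]).
    assert (Hd2 : Rabs (y - x) < eps / K) by (eapply Rlt_le_trans; [exact Hyx|apply Rmin_r]).
    specialize (H' (y - x) Hh ltac:(replace (x + (y - x)) with y by ring; lra) Hd1).
    replace (x + (y - x)) with y in H' by ring.
    set (q := (F y - F x) / (y - x)) in H'.
    assert (Hq : F y - F x = q * (y - x)) by (unfold q; field; auto).
    rewrite Hq, Rabs_mult.
    assert (Rabs q <= K).
    { unfold K. pose proof (Rabs_triang (q - G x) (G x)). replace (q - G x + G x) with q in H0 by ring. lra. }
    assert (Rabs q * Rabs (y - x) <= K * Rabs (y - x)) by (apply Rmult_le_compat_r; [apply Rabs_pos|lra]).
    assert (K * Rabs (y - x) < eps).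
    { apply (Rmult_lt_compat_l K) in Hd2; auto. replace (K * (eps / K)) with eps in Hd2 by (field; lra). lra. }
    lra.
Qed.

Lemma cw_plus A B F G x : cw A B F x -> cw A B G x -> cw A B (fun y => F y + G y) x.
Proof. intros HF HG. unfold cw. eapply filterlim_comp_2; [exact HF|exact HG|]. apply (filterlim_plus (F x) (G x)). Qed.

Lemma cw_mult A B F G x : cw A B F x -> cw A B G x -> cw A B (fun y => F y * G y) x.
Proof. intros HF HG. unfold cw. eapply filterlim_comp_2; [exact HF|exact HG|]. apply (filterlim_mult (F x) (G x)). Qed.

Lemma cw_cont A B F x : continuous F x -> cw A B F x.
Proof.
  intros H. apply ed_cw. intros eps He.
  destruct (proj1 (filterlim_locally F (F x)) H (mkposreal eps He)) as [d Hd].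
  exists d; split; [apply cond_pos|]. intros y _ Hy. apply ballR. apply Hd. apply ballR; exact Hy.
Qed.

Lemma mono (F dF : R -> R) A B c d : A <= c -> c <= d -> d <= B ->
  (forall x, c < x < d -> is_derive F x (dF x)) -> (forall x, c < x < d -> 0 <= dF x) ->
  cw A B F c -> cw A B F d -> F c <= F d.
Proof.
  intros Hac Hcd HdB Hder Hpos Hc Hd.
  assert (S1 : forall x y, c < x -> x <= y -> y < d -> F x <= F y).
  { intros x y Hx Hxy Hy. destruct (Req_dec x y) as [->|Hne]; [lra|].
    destruct (MVT_gen F x y dF) as [z [Hz Heq]].
    - intros t Ht. rewrite Rmin_left in Ht by lra. rewrite Rmax_right in Ht by lra. apply Hder; lra.
    - intros t Ht. rewrite Rmin_left in Ht by lra. rewrite Rmax_right in Ht by lra.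
      apply continuity_pt_filterlim. apply (ex_derive_continuous F t). eexists; apply Hder; lra.
    - rewrite Rmin_left in Hz by lra. rewrite Rmax_right in Hz by lra.
      assert (0 <= dF z) by (apply Hpos; lra). nra. }
  assert (S2 : forall y, c < y < d -> F c <= F y).
  { intros y Hy. apply Rnot_lt_le. intros Hlt.
    destruct (cw_ed A B F c Hc (F c - F y) ltac:(lra)) as [e [He H']].
    set (z := Rmin (c + e / 2) ((c + y) / 2)).
    assert (z <= c + e/2) by apply Rmin_l. assert (z <= (c+y)/2) by apply Rmin_r.
    assert (c < z) by (unfold z; apply Rmin_glb_lt; lra).
    specialize (H' z ltac:(lra) ltac:(rewrite Rabs_right; lra)).
    specialize (S1 z y ltac:(lra) ltac:(lra) ltac:(lra)).
    revert H'; unfold Rabs; destruct Rcase_abs; lra. }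
  destruct (Req_dec c d) as [<-|Hne]; [lra|].
  apply Rnot_lt_le. intros Hlt.
  destruct (cw_ed A B F d Hd (F c - F d) ltac:(lra)) as [e [He H']].
  set (z := Rmax (d - e / 2) ((c + d) / 2)).
  assert (d - e/2 <= z) by apply Rmax_l. assert ((c+d)/2 <= z) by apply Rmax_r.
  assert (z < d) by (unfold z; apply Rmax_lub_lt; lra).
  specialize (H' z ltac:(lra) ltac:(rewrite Rabs_left; lra)).
  specialize (S2 z ltac:(lra)).
  revert H'; unfold Rabs; destruct Rcase_abs; lra.
Qed.

Lemma cosh_mono y x : 0 <= y <= x -> cosh y <= cosh x.
Proof.
  intros H. unfold cosh.
  assert (H1 : exp y <= exp x) by (destruct (Req_dec y x) as [->|]; [lra| left; apply exp_increasing; lra]).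
  assert (H2 : 1 <= exp y) by (rewrite <- exp_0; destruct (Req_dec y 0) as [->|]; [lra| left; apply exp_increasing; lra]).
  assert (E1 : exp x * exp (-x) = 1) by (rewrite <- exp_plus; replace (x + - x) with 0 by ring; apply exp_0).
  assert (E2 : exp y * exp (-y) = 1) by (rewrite <- exp_plus; replace (y + - y) with 0 by ring; apply exp_0).
  pose proof (exp_pos x). pose proof (exp_pos (-x)). pose proof (exp_pos (-y)).
  assert (exp (-x) - exp (-y) = exp (-x) * exp (-y) * (exp y - exp x)).
  { replace (exp (-x) * exp (-y) * (exp y - exp x)) with (exp (-x) * (exp y * exp (-y)) - exp (-y) * (exp x * exp (-x))) by ring.
    rewrite E1, E2; ring. }
  assert (exp (-x) * exp (-y) <= 1).
  { assert (exp (-x) <= exp (-y)) by (destruct (Req_dec y x) as [->|]; [lra| left; apply exp_increasing; lra]).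
    assert (exp (-y) <= 1) by nra. nra. }
  nra.
Qed.

Lemma cw_of_der A B F x : ex_derive F x -> cw A B F x.
Proof. intros H. apply cw_cont. apply (ex_derive_continuous F x H). Qed.

Lemma cosh_even x : cosh (- x) = cosh x.
Proof. unfold cosh. rewrite Ropp_involutive. field. Qed.

Lemma cosh_ineq t : 2 * cosh (t / sqrt 2) <= cosh t + 1.
Proof.
  set (r := sqrt 2).
  assert (Hr : 0 < r) by apply Rlt_sqrt2_0.
  assert (Hrr : r * r = 2) by (apply sqrt_sqrt; lra).
  assert (Hr1 : 1 < r) by nra.
  assert (Hir : / r = r / 2) by (field_simplify_eq; lra).
  assert (Hpos : forall s, 0 <= s -> 2 * cosh (s / r) <= cosh s + 1).
  { intros s Hs.
    set (G := fun s => (exp s - exp (-s)) / 2 - r * ((exp (s / r) - exp (-(s / r))) / 2)).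
    assert (HG : forall u, 0 <= u -> 0 <= G u).
    { intros u Hu. replace 0 with (G 0) by (unfold G; rewrite Rdiv_0_l, Ropp_0, exp_0; field).
      apply (mono G (fun s => cosh s - cosh (s / r)) 0 u); try lra.
      - intros x Hx. unfold G. auto_derive; auto. unfold cosh. unfold Rdiv. field. lra.
      - intros x Hx. assert (0 <= x / r <= x).
        { split. apply Rdiv_le_0_compat; lra. apply Rmult_le_reg_r with r; auto. unfold Rdiv.
          rewrite Rmult_assoc, Rinv_l by lra. nra. }
        pose proof (cosh_mono (x / r) x H). lra.
      - apply cw_of_der. unfold G. auto_derive; auto.
      - apply cw_of_der. unfold G. auto_derive; auto. }
    set (F := fun s => (exp s + exp (-s)) / 2 + 1 - 2 * ((exp (s / r) + exp (-(s / r))) / 2)).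
    assert (0 <= F s).
    { replace 0 with (F 0) by (unfold F; rewrite Rdiv_0_l, Ropp_0, exp_0; field).
      apply (mono F G 0 s); try lra.
      - intros x Hx. unfold F, G. auto_derive; auto. unfold Rdiv. set (e1 := exp (x * / r)). set (e2 := exp (- (x * / r))). rewrite Hir. field.
      - intros x Hx. apply HG; lra.
      - apply cw_of_der. unfold F. auto_derive; auto.
      - apply cw_of_der. unfold F. auto_derive; auto. }
    unfold F in H. unfold cosh. lra. }
  destruct (Rle_dec 0 t). apply Hpos; auto.
  replace t with (- - t) by ring. rewrite cosh_even.
  unfold Rdiv. rewrite <- Ropp_mult_distr_l. rewrite cosh_even. apply Hpos. lra.
Qed.

Lemma cw_const A B c x : cw A B (fun _ => c) x.
Proof. apply cw_cont. apply continuous_const. Qed.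

Lemma exp_inv_l y : exp (- y) * exp y = 1.
Proof. rewrite <- exp_plus. replace (-y + y) with 0 by ring. apply exp_0. Qed.

Lemma forward A B a f f1 f2 x0 L :
  is_derive_on A B f f1 -> is_derive_on A B f1 f2 ->
  (forall x, A <= x <= B -> f2 x >= f x - a) ->
  A <= x0 -> 0 <= L -> x0 + L <= B -> 0 < a -> f x0 >= 2 * a -> f1 x0 >= 0 ->
  forall x, x0 <= x <= x0 + L -> f x >= a * cosh (x - x0) + a.
Proof.
  intros hd1 hd2 hineq HA HL HB ha hf0 hf10.
  assert (Dint : forall y, x0 < y < x0 + L -> is_derive f y (f1 y) /\ is_derive f1 y (f2 y)).
  { intros y Hy. split; [apply (der_interior A B f f1)|apply (der_interior A B f1 f2)]; auto; lra. }
  assert (HV : forall y, x0 <= y <= x0 + L -> f1 y + f y - a >= a * exp (y - x0)).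
  { intros y Hy.
    set (V := fun y => (f1 y + f y + - a) * exp (- y)).
    assert (V x0 <= V y).
    { apply (mono V (fun y => (f2 y - f y + a) * exp (- y)) A B); try lra.
      - intros t Ht. destruct (Dint t ltac:(lra)) as [H1 H2]. unfold V.
        auto_derive. repeat split; eexists; eassumption.
        replace (Derive (fun x => f x) t) with (f1 t) by (symmetry; apply is_derive_unique; exact H1).
        replace (Derive (fun x => f1 x) t) with (f2 t) by (symmetry; apply is_derive_unique; exact H2).
        ring.
      - intros t Ht. pose proof (hineq t ltac:(lra)). pose proof (exp_pos (- t)). nra.
      - unfold V. apply cw_mult. apply cw_plus. apply cw_plus.
        apply (der_cw A B f1 f2); auto; lra. apply (der_cw A B f f1); auto; lra. apply cw_const.
        apply cw_of_der. auto_derive; auto.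
      - unfold V. apply cw_mult. apply cw_plus. apply cw_plus.
        apply (der_cw A B f1 f2); auto; lra. apply (der_cw A B f f1); auto; lra. apply cw_const.
        apply cw_of_der. auto_derive; auto. }
    unfold V in H.
    assert (E : exp (y - x0) = exp (- x0) * exp y) by (rewrite <- exp_plus; f_equal; ring).
    pose proof (exp_inv_l y). pose proof (exp_pos y). pose proof (exp_pos (- x0)). pose proof (exp_pos (- y)).
    rewrite E.
    assert (a * exp (- x0) <= (f1 y + f y + - a) * exp (- y)) by nra.
    assert (K : a * exp (- x0) * exp y <= (f1 y + f y + - a) * exp (- y) * exp y) by nra.
    replace ((f1 y + f y + - a) * exp (- y) * exp y) with ((f1 y + f y + - a) * (exp (- y) * exp y)) in K by ring.
    rewrite H0 in K. lra. }
  intros x Hx.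
  set (W := fun y => (f y + - a) * exp (y - x0) + (- (a / 2)) * exp (2 * (y - x0))).
  assert (W x0 <= W x).
  { apply (mono W (fun y => (f1 y + f y - a - a * exp (y - x0)) * exp (y - x0)) A B); try lra.
    - intros t Ht. destruct (Dint t ltac:(lra)) as [H1 H2]. unfold W.
      auto_derive. eexists; eassumption.
      replace (Derive (fun x => f x) t) with (f1 t) by (symmetry; apply is_derive_unique; exact H1).
      unfold Rminus. replace (exp (2 * (t + - x0))) with (exp (t + - x0) * exp (t + - x0)) by (rewrite <- exp_plus; f_equal; ring).
      field.
    - intros t Ht. pose proof (HV t ltac:(lra)). pose proof (exp_pos (t - x0)). nra.
    - unfold W. apply cw_plus. apply cw_mult. apply cw_plus.
      apply (der_cw A B f f1); auto; lra. apply cw_const.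
      apply cw_of_der. auto_derive; auto. apply cw_of_der. auto_derive; auto.
    - unfold W. apply cw_plus. apply cw_mult. apply cw_plus.
      apply (der_cw A B f f1); auto; lra. apply cw_const.
      apply cw_of_der. auto_derive; auto. apply cw_of_der. auto_derive; auto. }
  unfold W in H. replace (x0 - x0) with 0 in H by ring. rewrite Rmult_0_r, exp_0 in H.
  replace (exp (2 * (x - x0))) with (exp (x - x0) * exp (x - x0)) in H by (rewrite <- exp_plus; f_equal; ring).
  unfold cosh. pose proof (exp_inv_l (x - x0)). pose proof (exp_pos (x - x0)). pose proof (exp_pos (- (x - x0))).
  set (E := exp (x - x0)) in *. set (P := exp (- (x - x0))) in *.
  assert (K : (f x + - a) * E * P + - (a / 2) * (E * E) * P >= (1 * (f x0 + - a) + - (a / 2) * 1) * P) by nra.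
  replace ((f x + - a) * E * P + - (a / 2) * (E * E) * P) with ((f x + -a) * (P * E) - a / 2 * E * (P * E)) in K by ring.
  rewrite H0 in K. nra.
Qed.

Lemma backward A B a f f1 f2 x0 L :
  is_derive_on A B f f1 -> is_derive_on A B f1 f2 ->
  (forall x, A <= x <= B -> f2 x >= f x - a) ->
  A <= x0 - L -> 0 <= L -> x0 <= B -> 0 < a -> f x0 >= 2 * a -> f1 x0 <= 0 ->
  forall x, x0 - L <= x <= x0 -> f x >= a * cosh (x0 - x) + a.
Proof.
  intros hd1 hd2 hineq HA HL HB ha hf0 hf10.
  assert (Dint : forall y, x0 - L < y < x0 -> is_derive f y (f1 y) /\ is_derive f1 y (f2 y)).
  { intros y Hy. split; [apply (der_interior A B f f1)|apply (der_interior A B f1 f2)]; auto; lra. }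
  assert (HV : forall y, x0 - L <= y <= x0 -> - f1 y + f y - a >= a * exp (x0 - y)).
  { intros y Hy.
    set (V := fun y => (f1 y + (-1) * f y + a) * exp y).
    assert (V y <= V x0).
    { apply (mono V (fun y => (f2 y - f y + a) * exp y) A B); try lra.
      - intros t Ht. destruct (Dint t ltac:(lra)) as [H1 H2]. unfold V.
        auto_derive. repeat split; eexists; eassumption.
        replace (Derive (fun x => f x) t) with (f1 t) by (symmetry; apply is_derive_unique; exact H1).
        replace (Derive (fun x => f1 x) t) with (f2 t) by (symmetry; apply is_derive_unique; exact H2).
        ring.
      - intros t Ht. pose proof (hineq t ltac:(lra)). pose proof (exp_pos t). nra.
      - unfold V. apply cw_mult. apply cw_plus. apply cw_plus.
        apply (der_cw A B f1 f2); auto; lra. apply cw_mult. apply cw_const. apply (der_cw A B f f1); auto; lra. apply cw_const.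
        apply cw_of_der. auto_derive; auto.
      - unfold V. apply cw_mult. apply cw_plus. apply cw_plus.
        apply (der_cw A B f1 f2); auto; lra. apply cw_mult. apply cw_const. apply (der_cw A B f f1); auto; lra. apply cw_const.
        apply cw_of_der. auto_derive; auto. }
    unfold V in H.
    assert (E : exp (x0 - y) = exp x0 * exp (- y)) by (rewrite <- exp_plus; f_equal; ring).
    pose proof (exp_inv_l y). pose proof (exp_pos y). pose proof (exp_pos x0). pose proof (exp_pos (- y)).
    rewrite E.
    assert (a * exp x0 <= (- f1 y + f y + - a) * exp y) by nra.
    assert (K : a * exp x0 * exp (- y) <= (- f1 y + f y + - a) * exp y * exp (- y)) by nra.
    replace ((- f1 y + f y + - a) * exp y * exp (- y)) with ((- f1 y + f y + - a) * (exp (- y) * exp y)) in K by ring.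
    rewrite H0 in K. lra. }
  intros x Hx.
  set (W := fun y => (-1) * ((f y + - a) * exp (x0 - y)) + (a / 2) * exp (2 * (x0 - y))).
  assert (W x <= W x0).
  { apply (mono W (fun y => (- f1 y + f y - a - a * exp (x0 - y)) * exp (x0 - y)) A B); try lra.
    - intros t Ht. destruct (Dint t ltac:(lra)) as [H1 H2]. unfold W.
      auto_derive. eexists; eassumption.
      replace (Derive (fun x => f x) t) with (f1 t) by (symmetry; apply is_derive_unique; exact H1).
      unfold Rminus. replace (exp (2 * (x0 + - t))) with (exp (x0 + - t) * exp (x0 + - t)) by (rewrite <- exp_plus; f_equal; ring).
      field.
    - intros t Ht. pose proof (HV t ltac:(lra)). pose proof (exp_pos (x0 - t)). nra.
    - unfold W. apply cw_plus. apply cw_mult. apply cw_const. apply cw_mult. apply cw_plus.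
      apply (der_cw A B f f1); auto; lra. apply cw_const.
      apply cw_of_der. auto_derive; auto. apply cw_mult. apply cw_const. apply cw_of_der. auto_derive; auto.
    - unfold W. apply cw_plus. apply cw_mult. apply cw_const. apply cw_mult. apply cw_plus.
      apply (der_cw A B f f1); auto; lra. apply cw_const.
      apply cw_of_der. auto_derive; auto. apply cw_mult. apply cw_const. apply cw_of_der. auto_derive; auto. }
  unfold W in H. replace (x0 - x0) with 0 in H by ring. rewrite Rmult_0_r, exp_0 in H.
  replace (exp (2 * (x0 - x))) with (exp (x0 - x) * exp (x0 - x)) in H by (rewrite <- exp_plus; f_equal; ring).
  unfold cosh. pose proof (exp_inv_l (x0 - x)). pose proof (exp_pos (x0 - x)). pose proof (exp_pos (- (x0 - x))).
  set (E := exp (x0 - x)) in *. set (P := exp (- (x0 - x))) in *.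
  assert (K : (f x + - a) * E * P + - (a / 2) * (E * E) * P >= (1 * (f x0 + - a) + - (a / 2) * 1) * P) by nra.
  replace ((f x + - a) * E * P + - (a / 2) * (E * E) * P) with ((f x + -a) * (P * E) - a / 2 * E * (P * E)) in K by ring.
  rewrite H0 in K. nra.
Qed.

Lemma clamp_lip A B y z : A <= B ->
  Rabs (Rmax A (Rmin B y) - Rmax A (Rmin B z)) <= Rabs (y - z).
Proof.
  intros H. unfold Rmax, Rmin. repeat destruct Rle_dec; unfold Rabs; repeat destruct Rcase_abs; lra.
Qed.

Lemma clamp_in A B y : A <= B -> A <= Rmax A (Rmin B y) <= B.
Proof. intros H. unfold Rmax, Rmin. repeat destruct Rle_dec; lra. Qed.

Lemma clamp_id A B y : A <= y <= B -> Rmax A (Rmin B y) = y.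
Proof. intros H. unfold Rmax, Rmin. repeat destruct Rle_dec; lra. Qed.

Lemma integral_lb A B f f1 (Lw : R -> R) u v :
  is_derive_on A B f f1 -> (forall x, A <= x <= B -> 0 <= f x) ->
  (forall x, continuous Lw x) -> A <= u -> u <= v -> v <= B ->
  (forall x, u <= x <= v -> Lw x <= f x) -> RInt Lw u v <= RInt f A B.
Proof.
  intros hd hnn hL Hu Huv Hv Hle.
  assert (HAB : A <= B) by lra.
  set (fe := fun x => f (Rmax A (Rmin B x))).
  assert (Hc : forall z, continuous fe z).
  { intros z. apply ed_cont. intros eps He.
    pose proof (clamp_in A B z HAB) as Hz.
    destruct (cw_ed A B f _ (der_cw A B f f1 _ hd Hz) eps He) as [d [Hd H']].
    exists d; split; auto. intros y Hy. unfold fe. apply H'. apply clamp_in; auto.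
    eapply Rle_lt_trans; [apply clamp_lip; auto|exact Hy]. }
  assert (exR : forall a b, ex_RInt fe a b) by (intros; apply (ex_RInt_continuous (V:=R_CompleteNormedModule)); auto).
  assert (Heq : RInt f A B = RInt fe A B).
  { apply RInt_ext. intros x Hx. rewrite Rmin_left in Hx by lra. rewrite Rmax_right in Hx by lra.
    unfold fe. rewrite clamp_id; auto; lra. }
  pose proof (RInt_Chasles fe A u v (exR _ _) (exR _ _)) as C1.
  pose proof (RInt_Chasles fe A v B (exR _ _) (exR _ _)) as C2.
  change plus with Rplus in C1, C2.
  assert (0 <= RInt fe A u).
  { apply RInt_ge_0; auto. intros x Hx. unfold fe. rewrite clamp_id by lra. apply hnn; lra. }
  assert (0 <= RInt fe v B).
  { apply RInt_ge_0; auto. intros x Hx. unfold fe. rewrite clamp_id by lra. apply hnn; lra. }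
  assert (RInt Lw u v <= RInt fe u v).
  { apply RInt_le; auto. exact (ex_RInt_continuous Lw u v (fun z _ => hL z)).
    intros x Hx. unfold fe. rewrite clamp_id by lra. apply Hle; lra. }
  lra.
Qed.

Lemma Fw_der a x0 x :
  is_derive (fun y => 2 * sqrt 2 * a * sinh ((y - x0) / sqrt 2)) x (2 * a * cosh ((x - x0) / sqrt 2)).
Proof.
  assert (Hg : is_derive (fun y => (y - x0) / sqrt 2) x (/ sqrt 2)).
  { auto_derive; auto. field. apply sqrt2_neq_0. }
  assert (Hs : is_derive sinh ((x - x0) / sqrt 2) (cosh ((x - x0) / sqrt 2))).
  { apply is_derive_Reals, derivable_pt_lim_sinh. }
  pose proof (is_derive_comp sinh _ x _ _ Hs Hg) as H.
  pose proof (is_derive_scal _ x (2 * sqrt 2 * a) _ H) as H2.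
  change scal with Rmult in H2.
  replace (2 * a * cosh ((x - x0) / sqrt 2)) with (2 * sqrt 2 * a * (/ sqrt 2 * cosh ((x - x0) / sqrt 2))).
  exact H2. field. apply sqrt2_neq_0.
Qed.

Lemma Lw_cont a x0 x : continuous (fun y => 2 * a * cosh ((y - x0) / sqrt 2)) x.
Proof.
  apply (ex_derive_continuous (fun y => 2 * a * cosh ((y - x0) / sqrt 2)) x).
  assert (Hg : is_derive (fun y => (y - x0) / sqrt 2) x (/ sqrt 2)).
  { auto_derive; auto. field. apply sqrt2_neq_0. }
  assert (Hs : is_derive cosh ((x - x0) / sqrt 2) (sinh ((x - x0) / sqrt 2))).
  { apply is_derive_Reals, derivable_pt_lim_cosh. }
  pose proof (is_derive_comp cosh _ x _ _ Hs Hg) as H.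
  pose proof (is_derive_scal _ x (2 * a) _ H) as H2.
  eexists; exact H2.
Qed.

Lemma Lw_int a x0 u v :
  RInt (fun y => 2 * a * cosh ((y - x0) / sqrt 2)) u v =
  2 * sqrt 2 * a * sinh ((v - x0) / sqrt 2) - 2 * sqrt 2 * a * sinh ((u - x0) / sqrt 2).
Proof.
  apply is_RInt_unique.
  apply (is_RInt_derive (fun y => 2 * sqrt 2 * a * sinh ((y - x0) / sqrt 2))).
  - intros x _. apply Fw_der.
  - intros x _. apply Lw_cont.
Qed.

Lemma sinh_odd y : sinh (- y) = - sinh y.
Proof. unfold sinh. rewrite Ropp_involutive. field. Qed.

Theorem lemmaB4 (l a : R) (f f1 f2 : R -> R)
  (hl : 0 < l) (ha : 0 < a)
  (hC2 : C2_on_with (-(2 * l)) (2 * l) f f1 f2)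
  (hnn : forall x, -(2 * l) <= x <= 2 * l -> 0 <= f x)
  (hineq : forall x, -(2 * l) <= x <= 2 * l -> f2 x >= f x - a)
  (hmax : exists x0, -l <= x0 <= l /\ f x0 >= 2 * a) :
  RInt f (-(2 * l)) (2 * l) >= 2 * sqrt 2 * a * sinh (l / sqrt 2).
Proof.
  destruct hC2 as [hd1 [hd2 _]]. destruct hmax as [x0 [Hx0 Hf0]].
  assert (Hpt : forall x, f x >= a * cosh (x - x0) + a -> 2 * a * cosh ((x - x0) / sqrt 2) <= f x).
  { intros x Hx. pose proof (cosh_ineq (x - x0)). nra. }
  apply Rle_ge.
  destruct (Rle_dec 0 (f1 x0)) as [Hp|Hn].
  - pose proof (forward _ _ a f f1 f2 x0 l hd1 hd2 hineq ltac:(lra) ltac:(lra) ltac:(lra) ha Hf0 ltac:(lra)) as Hfw.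
    pose proof (integral_lb (-(2 * l)) (2 * l) f f1 (fun y => 2 * a * cosh ((y - x0) / sqrt 2)) x0 (x0 + l)
      hd1 hnn (Lw_cont a x0) ltac:(lra) ltac:(lra) ltac:(lra) (fun x Hx => Hpt x (Hfw x Hx))) as H.
    rewrite Lw_int in H.
    replace ((x0 + l - x0) / sqrt 2) with (l / sqrt 2) in H by (field; apply sqrt2_neq_0).
    replace ((x0 - x0) / sqrt 2) with 0 in H by (field; apply sqrt2_neq_0).
    rewrite sinh_0 in H. lra.
  - pose proof (backward _ _ a f f1 f2 x0 l hd1 hd2 hineq ltac:(lra) ltac:(lra) ltac:(lra) ha Hf0 ltac:(lra)) as Hbw.
    assert (Hbw' : forall x, x0 - l <= x <= x0 -> f x >= a * cosh (x - x0) + a).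
    { intros x Hx. replace (x - x0) with (- (x0 - x)) by ring. rewrite cosh_even. apply Hbw; auto. }
    pose proof (integral_lb (-(2 * l)) (2 * l) f f1 (fun y => 2 * a * cosh ((y - x0) / sqrt 2)) (x0 - l) x0
      hd1 hnn (Lw_cont a x0) ltac:(lra) ltac:(lra) ltac:(lra) (fun x Hx => Hpt x (Hbw' x Hx))) as H.
    rewrite Lw_int in H.
    replace ((x0 - l - x0) / sqrt 2) with (- (l / sqrt 2)) in H by (field; apply sqrt2_neq_0).
    replace ((x0 - x0) / sqrt 2) with 0 in H by (field; apply sqrt2_neq_0).
    rewrite sinh_0, sinh_odd in H. lra.
Qed.
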